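(* For $n\ge1$ let $M_n\in\mathbb R^{n\times n}$ be the matrix with entries $(M_n)_{ij}=(i-j)^2$. Then $\operatorname{st}_+(M_n)\le\lceil n/2\rceil+2$.
   Context: The SNT-rank $\operatorname{st}_+(A)$ of a symmetric entrywise nonnegative $n\times n$ matrix $A$ is the minimal $k$ such that $A=BCB^T$ with $B$ an entrywise nonnegative $n\times k$ matrix and $C$ a symmetric entrywise nonnegative $k\times k$ matrix. *)

(* Defs.v *)
From mathcomp Require Import all_boot all_order all_algebra.
From mathcomp Require Import reals.
Set Implicit Arguments. Unset Strict Implicit. Unset Printing Implicit Defensive.
Import Order.TTheory GRing.Theory Num.Theory.
Local Open Scope ring_scope.

Definition nonneg_mx (R : realType) m n (A : 'M[R]_(m, n)) : Prop :=
  forall i j, 0 <= A i j.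

Definition snt_factorization (R : realType) n k (A : 'M[R]_n) : Prop :=
  exists (B : 'M[R]_(n, k)) (C : 'M[R]_k),
    [/\ nonneg_mx B, nonneg_mx C, C^T = C & A = B *m C *m B^T].

(* st_+(A) <= m, i.e. the minimal such k is at most m *)
Definition snt_rank_le (R : realType) n (A : 'M[R]_n) (m : nat) : Prop :=
  exists k : nat, (k <= m)%N /\ snt_factorization k A.

(* M_n with entries (i - j)^2, indices 1-based (same as 0-based) *)
Definition Msq (R : realType) n : 'M[R]_n :=
  \matrix_(i < n, j < n) (((i : nat)%:R - (j : nat)%:R) ^+ 2 : R).

(* Main.v *)
Require Import Defs.
From mathcomp Require Import all_boot all_order all_algebra.
From mathcomp Require Import reals.
From mathcomp Require Import zify ring lra.
Set Implicit Arguments. Unset Strict Implicit. Unset Printing Implicit Defensive.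
Import Order.TTheory GRing.Theory Num.Theory.
Local Open Scope ring_scope.

Lemma pidx_lt n (i : 'I_n) : (minn i (n.-1 - i) < uphalf n)%N.
Proof. have := ltn_ord i; rewrite uphalfE; lia. Qed.

Definition pidx n (i : 'I_n) : 'I_(uphalf n) := Ordinal (pidx_lt i).

Section S.
Variables (R : realType) (n : nat).
Let m := uphalf n.

Definition Pm : 'M[R]_(n, m) := \matrix_(i, a) ((a == pidx i)%:R).
Definition Zm : 'M[R]_(n, 2) :=
  \matrix_(i, c) (if c == ord0 then ((2 * i) - n.-1)%N%:R else (n.-1 - 2 * i)%N%:R).
Definition Cp : 'M[R]_m := \matrix_(a, b) (((a : nat)%:R - (b : nat)%:R) ^+ 2).
Definition Cz : 'M[R]_2 := \matrix_(c, d) ((c != d)%:R).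

Lemma mulP k (X : 'M[R]_(m, k)) i b : (Pm *m X) i b = X (pidx i) b.
Proof.
rewrite mxE (bigD1 (pidx i)) //= big1 ?addr0; first by rewrite mxE eqxx mul1r.
by move=> a /negbTE h; rewrite mxE h mul0r.
Qed.

Lemma mulPt k (X : 'M[R]_(k, m)) a j : (X *m Pm^T) a j = X a (pidx j).
Proof.
rewrite mxE (bigD1 (pidx j)) //= big1 ?addr0; first by rewrite !mxE eqxx mulr1.
by move=> b /negbTE h; rewrite !mxE h mulr0.
Qed.

End S.

Theorem mainTheorem9 (R : realType) (n : nat) :
  (1 <= n)%N -> snt_rank_le (Msq R n) (uphalf n + 2).
Proof.
move=> n1; exists (uphalf n + 2)%N; split => //.
exists (row_mx (Pm R n) (Zm R n)), (block_mx (Cp R n) 0 0 (Cz R)); split.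
- move=> i j; rewrite /row_mx mxE; case: split => a; rewrite !mxE //.
  by case: ifP.
- move=> i j; rewrite /block_mx /col_mx /row_mx mxE; case: split => a;
  rewrite mxE; case: split => b; rewrite !mxE //.
  by rewrite sqr_ge0.
- rewrite tr_block_mx !trmx0; congr block_mx; apply/matrixP => a b; rewrite !mxE.
    by rewrite -sqrrN opprB.
  by rewrite eq_sym.
rewrite tr_row_mx mul_row_block mul_row_col !mulmx0 addr0 add0r.
apply/matrixP => i j; rewrite mxE [in RHS]mxE mulPt mulP [Cp _ _ _ _]mxE.
rewrite !mxE !big_ord_recr !big_ord0 /= !add0r !mxE /=.
rewrite !big_ord_recr !big_ord0 /= !add0r !mxE /=.
have hi := ltn_ord i; have hj := ltn_ord j.
case: (leqP (2 * i) n.-1) => ci; case: (leqP (2 * j) n.-1) => cj.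
- have -> : minn i (n.-1 - i) = i by lia.
  have -> : minn j (n.-1 - j) = j by lia.
  have -> : (2 * i - n.-1 = 0)%N by lia.
  have -> : (2 * j - n.-1 = 0)%N by lia.
  rewrite !mul0r !mulr0 !addr0; ring.
- have -> : minn i (n.-1 - i) = i by lia.
  have -> : minn j (n.-1 - j) = (n.-1 - j)%N by lia.
  have -> : (2 * i - n.-1 = 0)%N by lia.
  have -> : (n.-1 - 2 * j = 0)%N by lia.
  have e1 : (j <= n.-1)%N by lia.
  have e2 : (n.-1 <= 2 * j)%N by lia.
  rewrite !natrB // !natrM; ring.
- have -> : minn i (n.-1 - i) = (n.-1 - i)%N by lia.
  have -> : minn j (n.-1 - j) = j by lia.
  have -> : (n.-1 - 2 * i = 0)%N by lia.
  have -> : (2 * j - n.-1 = 0)%N by lia.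
  have e1 : (i <= n.-1)%N by lia.
  have e2 : (n.-1 <= 2 * i)%N by lia.
  rewrite !natrB // !natrM; ring.
- have -> : minn i (n.-1 - i) = (n.-1 - i)%N by lia.
  have -> : minn j (n.-1 - j) = (n.-1 - j)%N by lia.
  have -> : (n.-1 - 2 * i = 0)%N by lia.
  have -> : (n.-1 - 2 * j = 0)%N by lia.
  have e1 : (i <= n.-1)%N by lia.
  have e2 : (j <= n.-1)%N by lia.
  have e3 : (n.-1 <= 2 * j)%N by lia.
  have e4 : (n.-1 <= 2 * i)%N by lia.
  rewrite !natrB // mul0r addr0; ring.
Qed.
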